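(* Let $Q=(q_n)_{n\ge1}$ be a basic sequence that is infinite in limit, and suppose there exist constants $M$ and $t$ such that $l_j\le M$ for all $j>t$. Then for every $Q$-special sequence $F$ and every real $\psi>1$, $$D_n^*(y_F)<\psi\cdot\sqrt{2M}\cdot(2M+1)\cdot n^{-1/2}$$ for all sufficiently large $n$.
   Context: A basic sequence is a sequence $Q=(q_n)_{n\ge1}$ of integers with $q_n\ge 2$; it is infinite in limit if $q_n\to\infty$. $\mathbb{N}$ denotes the positive integers. For each positive integer $j$ let $\nu_j=\min\{N : q_m\ge 2j^2 \text{ for all } m\ge N\}$. Define $l_1=\max(\nu_2-1,1)$ and, recursively for $i\ge 2$, $l_i=\max\big(\min\{k\in\mathbb{N} : l_1+2l_2+\cdots+(i-1)l_{i-1}+ik\ge \nu_{i+1}-1\},1\big)$. Put $L_i=\sum_{j=1}^i jl_j$ (with $L_0=0$). Let $S_Q=\{(a,b,c)\in\mathbb{N}^3 : b\le l_a,\ c\le a\}$ and $\phi_Q(a,b,c)=L_{a-1}+(b-1)a+c$; $\phi_Q$ is a bijection $S_Q\to\mathbb{N}$. A $Q$-special sequence is a family of integers $F=(F_{(a,b,c)})_{(a,b,c)\in S_Q}$ with $F_{(a,b,1)}=0$ for all $(a,b,1)\in S_Q$ and $\frac{F_{(a,b,c)}}{q_{\phi_Q(a,b,c)}}\in\left[\frac{c-1}{a}-\frac{1}{2a^2},\frac{c-1}{a}+\frac{1}{2a^2}\right]$ for $(a,b,c)\in S_Q$ with $c>1$. For such $F$ put $E_{F,n}=F_{\phi_Q^{-1}(n)}$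 and let $y_F$ be the sequence $\left(E_{F,n}/q_n\right)_{n=1}^\infty$. For a sequence $w=(w_1,w_2,\dots)$ in $[0,1)$, the star discrepancy is $D_n^*(w)=\sup_{0<\gamma\le1}\left|\frac{\#\{1\le k\le n: w_k\in[0,\gamma)\}}{n}-\gamma\right|$. *)

(* Defs.v *)
From HB Require Import structures.
From Stdlib Require Import ClassicalEpsilon.
From mathcomp Require Import all_boot all_order all_algebra.
From mathcomp Require Import classical_sets reals.

Set Implicit Arguments.
Unset Strict Implicit.
Unset Printing Implicit Defensive.

Import Order.TTheory GRing.Theory Num.Theory.

(* MathComp + MathComp-Analysis (reals.v for [sup]).
   A sequence Q = (q_n)_{n>=1} is a function q : nat -> nat; q 0 is ignored. *)

Definition basic_seq (q : nat -> nat) : Prop := forall n, (1 <= n)%N -> (2 <= q n)%N.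

Definition infinite_in_limit (q : nat -> nat) : Prop :=
  forall B, exists N, forall n, (N <= n)%N -> (B <= q n)%N.

Definition is_nu (q : nat -> nat) (j N : nat) : Prop :=
  [/\ (1 <= N)%N,
      (forall m, (N <= m)%N -> (2 * j ^ 2 <= q m)%N) &
      (forall N', (1 <= N')%N -> (forall m, (N' <= m)%N -> (2 * j ^ 2 <= q m)%N) ->
                  (N <= N')%N)].

Definition nu (q : nat -> nat) (j : nat) : nat :=
  epsilon (inhabits 0%N) (fun N => is_nu q j N).

Lemma least_k_ex (p L T : nat) :
  exists k, (0 < k)%N && (T <= L + p.+1 * k)%N.
Proof.
exists T.+1; apply/andP; split=> //.
apply: (leq_trans (leqnSn T)); apply: (leq_trans _ (leq_addl _ _)).
by rewrite mulSn leq_addr.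
Qed.

Definition least_k (p L T : nat) : nat := ex_minn (least_k_ex p L T).

(* l_i as a function of L = L_{i-1} = l_1 + 2 l_2 + ... + (i-1) l_{i-1} *)
Definition l_aux (q : nat -> nat) (i L : nat) : nat :=
  if i == 1%N then maxn (nu q 2 - 1) 1
  else maxn (least_k i.-1 L (nu q i.+1 - 1)) 1.

Fixpoint Lsum (q : nat -> nat) (i : nat) : nat :=
  match i with
  | 0 => 0
  | j.+1 => Lsum q j + j.+1 * l_aux q j.+1 (Lsum q j)
  end.

Definition l (q : nat -> nat) (i : nat) : nat := l_aux q i (Lsum q i.-1).

Definition inS (q : nat -> nat) (a b c : nat) : Prop :=
  [/\ (1 <= a)%N, (1 <= b)%N, (b <= l q a)%N, (1 <= c)%N & (c <= a)%N].

Definition phi (q : nat -> nat) (a b c : nat) : nat :=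
  (Lsum q a.-1 + (b - 1) * a + c)%N.

Definition phi_inv (q : nat -> nat) (n : nat) : nat * nat * nat :=
  epsilon (inhabits (0, 0, 0)%N)
    (fun s => inS q s.1.1 s.1.2 s.2 /\ phi q s.1.1 s.1.2 s.2 = n).

Local Open Scope ring_scope.

Definition Q_special (R : realType) (q : nat -> nat) (F : nat -> nat -> nat -> int) : Prop :=
  forall a b c, inS q a b c ->
    (c = 1%N -> F a b c = 0) /\
    ((1 < c)%N ->
       let x : R := (F a b c)%:~R / (q (phi q a b c))%:R in
       ((c%:R - 1) / a%:R - 1 / (2 * a%:R ^+ 2) <= x) /\
       (x <= (c%:R - 1) / a%:R + 1 / (2 * a%:R ^+ 2))).

Definition E_F (q : nat -> nat) (F : nat -> nat -> nat -> int) (n : nat) : int :=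
  let s := phi_inv q n in F s.1.1 s.1.2 s.2.

Definition y_F (R : realType) (q : nat -> nat) (F : nat -> nat -> nat -> int) (n : nat) : R :=
  (E_F q F n)%:~R / (q n)%:R.

Definition star_discrepancy (R : realType) (w : nat -> R) (n : nat) : R :=
  sup [set `| (count (fun k => (0 <= w k) && (w k < g)) (iota 1 n))%:R / n%:R - g |
        | g in [set g : R | 0 < g <= 1]]%classic.

(* Main.v *)
Require Import Defs.
From HB Require Import structures.
From Stdlib Require Import ClassicalEpsilon.
From mathcomp Require Import all_boot all_order all_algebra.
From mathcomp Require Import classical_sets reals.
From mathcomp Require Import zify ring lra.
Import Order.TTheory GRing.Theory Num.Theory.

Section Nat.
Variable q : nat -> nat.

Lemma l_ge1 i : (1 <= l q i)%N.
Proof. by rewrite /l /l_aux; case: ifP => _; exact: leq_maxr. Qed.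

Lemma LsumS i : Lsum q i.+1 = (Lsum q i + i.+1 * l q i.+1)%N.
Proof. by []. Qed.

Lemma Lsum_lt i : (Lsum q i < Lsum q i.+1)%N.
Proof. rewrite LsumS; have := l_ge1 i.+1; nia. Qed.

Lemma Lsum_mono i j : (i <= j)%N -> (Lsum q i <= Lsum q j)%N.
Proof.
elim: j => [|j IH]; first by rewrite leqn0 => /eqP ->.
rewrite leq_eqVlt => /orP [/eqP -> //|]; rewrite ltnS => /IH h.
exact: leq_trans h (ltnW (Lsum_lt j)).
Qed.

Lemma Lsum_ge i : (i <= Lsum q i)%N.
Proof. elim: i => [//|i IH]; exact: leq_ltn_trans IH (Lsum_lt i). Qed.

Lemma Lsum_sq i : (i * i.+1 <= 2 * Lsum q i)%N.
Proof. elim: i => [//|i IH]; rewrite LsumS; have := l_ge1 i.+1; nia. Qed.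

Lemma phi_bounds a b c : inS q a b c ->
  (Lsum q a.-1 < phi q a b c)%N /\ (phi q a b c <= Lsum q a)%N.
Proof.
case=> ha hb hbl hc hca; rewrite /phi.
case: a ha hbl hca => [//|a] _ hbl hca; rewrite LsumS succnK; split; first nia.
have : ((b - 1) * a.+1 + a.+1 <= l q a.+1 * a.+1)%N.
  by rewrite -mulSnr; apply: leq_mul => //; lia.
rewrite [_ * l q _]mulnC; nia.
Qed.

Lemma phi_inj a b c a' b' c' : inS q a b c -> inS q a' b' c' ->
  phi q a b c = phi q a' b' c' -> (a, b, c) = (a', b', c').
Proof.
move=> h h' e.
have [l1 u1] := phi_bounds _ _ _ h; have [l2 u2] := phi_bounds _ _ _ h'.
have ea : a = a'.
  have [ha _ _ _ _] := h; have [ha' _ _ _ _] := h'.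
  case: (ltngtP a a') => // hlt.
  - have H := @Lsum_mono a a'.-1 ltac:(lia); lia.
  - have H := @Lsum_mono a' a.-1 ltac:(lia); lia.
subst a'.
case: h h' e => ha hb _ hc hca [_ hb' _ hc' hca']; rewrite /phi => e.
have e2 : ((b - 1) * a + (c - 1) = (b' - 1) * a + (c' - 1))%N by lia.
have e3 := congr1 (divn^~ a) e2; have e4 := congr1 (modn^~ a) e2.
rewrite /= !divnMDl ?divn_small in e3; try lia.
rewrite /= !modnMDl ?modn_small in e4; try lia.
by congr (_, _, _); lia.
Qed.

Lemma phi_invE a b c : inS q a b c -> phi_inv q (phi q a b c) = (a, b, c).
Proof.
move=> h; rewrite /phi_inv.
have := @epsilon_spec _ (inhabits (0, 0, 0)%N)
  (fun s => inS q s.1.1 s.1.2 s.2 /\ phi q s.1.1 s.1.2 s.2 = phi q a b c).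
case: (epsilon _ _) => [[x y] z] /= [| h1 h2]; first by exists (a, b, c).
exact: phi_inj h1 h h2.
Qed.

Fixpoint runs i := if i is j.+1 then (runs j + l q j.+1)%N else 0%N.

Lemma runs_mono i j : (i <= j)%N -> (runs i <= runs j)%N.
Proof.
elim: j => [|j IH]; first by rewrite leqn0 => /eqP ->.
rewrite leq_eqVlt => /orP [/eqP -> //|]; rewrite ltnS => /IH h /=.
exact: leq_trans h (leq_addr _ _).
Qed.

Lemma locate n : (0 < n)%N -> exists a, [/\ (0 < a)%N, (Lsum q a.-1 < n)%N & (n <= Lsum q a)%N].
Proof.
move=> hn.
suff key : forall A m, (0 < m)%N -> (m <= Lsum q A)%N ->
  exists a, [/\ (0 < a)%N, (Lsum q a.-1 < m)%N & (m <= Lsum q a)%N].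
  exact: (key n n hn (Lsum_ge n)).
elim => [|A IH] m hm hA.
  by move: hA; rewrite /=; lia.
case: (leqP m (Lsum q A)) => h.
  by apply: IH.
by exists A.+1.
Qed.
End Nat.

Section Real.
Variable R : realType.
Local Open Scope ring_scope.

Lemma cnt_lower (P : pred nat) (x : R) a :
  (forall k, (k < a)%N -> k%:R < x -> P k) -> x <= a%:R ->
  x <= (count P (iota 0 a))%:R.
Proof.
move=> H hx.
suff : (x <= (count P (iota 0 a))%:R) \/ count P (iota 0 a) = a.
  by case=> // ->.
elim: a H {hx} => [|a IH] H; first by right.
have H' : forall k, (k < a)%N -> k%:R < x -> P k.
  by move=> k hk; apply: H; lia.
rewrite -addn1 iotaD count_cat /= add0n addn0.
case: (IH H') => [h|h].
  left; apply: (le_trans h); rewrite ler_nat; exact: leq_addr.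
case: (lerP x a%:R) => hxa.
  by left; rewrite h; apply: (le_trans hxa); rewrite ler_nat; exact: leq_addr.
by right; rewrite h (H a (ltnSn a) hxa) addn1.
Qed.

Lemma cnt_upper (P : pred nat) (x : R) a :
  (forall k, (k < a)%N -> P k -> k%:R < x) -> 0 <= x ->
  (count P (iota 0 a))%:R <= x + 1.
Proof.
elim: a => [|a IH] H hx; first by rewrite /=; lra.
have H' : forall k, (k < a)%N -> P k -> k%:R < x.
  by move=> k hk; apply: H; lia.
rewrite -addn1 iotaD count_cat /= add0n addn0.
case hPa : (P a).
  have ha := H a (ltnSn a) hPa.
  have hc : (count P (iota 0 a) <= a)%N.
    by apply: (leq_trans (count_size _ _)); rewrite size_iota.
  rewrite (_ : (count P (iota 0 a) + true = (count P (iota 0 a)).+1)%N) ?addn1 //.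
  rewrite -natr1; move: hc; rewrite -(ler_nat R) => hc; lra.
by rewrite (_ : (count P (iota 0 a) + false = count P (iota 0 a))%N) ?addn0 //; apply: IH.
Qed.

Lemma tri (u v c d : R) : `|u - v| <= c -> `|v| <= d -> `|u| <= d + c.
Proof. move=> h1 h2; have := ler_normD (u - v) v; rewrite subrK; lra. Qed.

End Real.
Arguments tri {R u v c d}.

Section Run.
Variable R : realType.
Variable q : nat -> nat.
Variable F : nat -> nat -> nat -> int.
Hypothesis hF : Q_special R q F.
Local Open Scope ring_scope.

Definition Pg (g : R) : pred nat :=
  fun k => (0 <= y_F R q F k) && (y_F R q F k < g).
Definition cnt n g := count (Pg g) (iota 1 n).
Definition err n g : R := (cnt n g)%:R - n%:R * g.

Lemma arith (A K z : R) : 1 <= A -> 1 <= K ->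
  K / A - 1 / (2 * A ^+ 2) <= z -> z <= K / A + 1 / (2 * A ^+ 2) ->
  0 <= z /\ K - 1/2 <= A * z <= K + 1/2.
Proof.
move=> hA hK lo hi.
have hA0 : A != 0 by rewrite gt_eqF //; lra.
have h2A : 2 * A != 0 by rewrite gt_eqF //; lra.
set u : R := (2 * A)^-1.
have hu : u * (2 * A) = 1 by rewrite mulVf.
have hu0 : 0 <= u by rewrite invr_ge0; lra.
have hu1 : u <= 1/2 by nra.
have e1 : A * (K / A - 1 / (2 * A ^+ 2)) = K - u by rewrite /u; field.
have e2 : A * (K / A + 1 / (2 * A ^+ 2)) = K + u by rewrite /u; field.
have lo' := ler_wpM2l (ltW (lt_le_trans ltr01 hA)) lo.
have hi' := ler_wpM2l (ltW (lt_le_trans ltr01 hA)) hi.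
rewrite e1 in lo'; rewrite e2 in hi'.
split; last by apply/andP; lra.
nra.
Qed.

Lemma val_bounds a b k : (0 < a)%N -> (1 <= b <= l q a)%N -> (k < a)%N ->
  let z := y_F R q F (1 + (Lsum q a.-1 + (b - 1) * a) + k) in
  0 <= z /\ k%:R - 1/2 <= a%:R * z <= k%:R + 1/2.
Proof.
move=> ha /andP [hb1 hb2] hk z.
have hS : inS q a b k.+1 by split => //; lia.
have ep : (1 + (Lsum q a.-1 + (b - 1) * a) + k)%N = phi q a b k.+1.
  by rewrite /phi; nia.
have yz : z = (F a b k.+1)%:~R / (q (phi q a b k.+1))%:R.
  by rewrite /z ep /y_F /E_F phi_invE.
have [h1 h2] := hF _ _ _ hS.
case: (posnP k) => [k0|kpos].
  rewrite yz h1 ?k0 // mulr0z mul0r mulr0; split; [|apply/andP]; lra.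
have [lo hi] := h2 (ltac:(lia) : (1 < k.+1)%N).
rewrite -/z -yz in lo hi.
rewrite -natr1 addrK in lo hi.
apply: arith => //; rewrite ler1n //.
Qed.


Lemma run_err a b g : (0 < a)%N -> (1 <= b <= l q a)%N -> 0 < g <= 1 ->
  `|err (Lsum q a.-1 + (b - 1) * a + a) g - err (Lsum q a.-1 + (b - 1) * a) g| <= 2.
Proof.
move=> ha hb /andP [g0 g1].
set m := (Lsum q a.-1 + (b - 1) * a)%N.
have E : err (m + a) g - err m g =
    (count (Pg g) (iota (1 + m) a))%:R - a%:R * g.
  rewrite /err /cnt iotaD count_cat !natrD; ring.
rewrite E -[(1 + m)%N]addn0 iotaDl count_map.
set c := count _ _.
have hA : (1 <= a%:R :> R) by rewrite ler1n.
have lo : a%:R * g - 1/2 <= c%:R.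
  apply: cnt_lower; last by nra.
  move=> k hk hkx; rewrite /preim /Pg /=.
  have [z0 /andP [zl zh]] := val_bounds a b k ha hb hk.
  apply/andP; split => //; nra.
have hi : c%:R <= a%:R * g + 1/2 + 1.
  apply: cnt_upper; last by nra.
  move=> k hk; rewrite /preim /Pg /= => /andP [_ zg].
  have [z0 /andP [zl zh]] := val_bounds a b k ha hb hk.
  nra.
rewrite ler_norml; apply/andP; split; lra.
Qed.

Lemma err_step m r g : 0 < g <= 1 -> `|err (m + r) g - err m g| <= r%:R.
Proof.
move=> /andP [g0 g1].
elim: r => [|r IH]; first by rewrite addn0 subrr normr0.
have -> : err (m + r.+1) g = err (m + r) g + ((Pg g (1 + (m + r)))%:R - g).
  rewrite /err /cnt addnS -[(m + r).+1]addn1 iotaD count_cat.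
  have -> : count (Pg g) (iota (1 + (m + r)) 1) = Pg g (1 + (m + r)).
    by rewrite /= addn0.
  rewrite !natrD; ring.
have hb : `|(Pg g (1 + (m + r)))%:R - g| <= 1.
  by case: (Pg g _); rewrite ler_norml /=; apply/andP; split; lra.
have := ler_normD (err (m + r) g - err m g) ((Pg g (1 + (m + r)))%:R - g).
rewrite -natr1; move=> h.
have -> : err (m + r) g + ((Pg g (1 + (m + r)))%:R - g) - err m g =
  err (m + r) g - err m g + ((Pg g (1 + (m + r)))%:R - g) by ring.
lra.
Qed.

Lemma inner a g : 0 < g <= 1 -> `|err (Lsum q a) g| <= 2 * (runs q a)%:R ->
  forall b, (b <= l q a.+1)%N ->
  `|err (Lsum q a + b * a.+1) g| <= 2 * (runs q a + b)%:R.
Proof.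
move=> hg h0; elim => [|b IH] hb; first by rewrite mul0n !addn0.
have := run_err a.+1 b.+1 g (ltn0Sn a) (ltac:(apply/andP; split => //)) hg.
rewrite subn1 /= => h.
have e : (Lsum q a + b.+1 * a.+1 = Lsum q a + b * a.+1 + a.+1)%N by rewrite mulSnr addnA.
rewrite e; have := tri h (IH (ltnW hb)).
have -> : ((runs q a + b.+1)%:R = (runs q a + b)%:R + 1 :> R) by rewrite addnS -natr1.
lra.
Qed.

Lemma full a g : 0 < g <= 1 -> `|err (Lsum q a) g| <= 2 * (runs q a)%:R.
Proof.
move=> hg; elim: a => [|a IH].
  by rewrite /err /cnt /= mul0r subr0 normr0 mulr0.
have := inner _ _ hg IH _ (leqnn (l q a.+1)).
by rewrite LsumS mulnC.
Qed.

Lemma general n : (0 < n)%N -> exists a, [/\ (0 < a)%N, (Lsum q a.-1 < n)%N &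
  forall g, 0 < g <= 1 -> `|err n g| <= 2 * (runs q a)%:R + a%:R].
Proof.
move=> hn; have [a [ha h1 h2]] := locate q n hn.
exists a; split => // g hg.
case: a ha h1 h2 => [//|a] _ h1 h2; rewrite succnK in h1.
set d := (n - Lsum q a)%N.
have hd := divn_eq d a.+1.
have hr : (d %% a.+1 < a.+1)%N by rewrite ltn_mod.
have hb : (d %/ a.+1 <= l q a.+1)%N.
  have : (d <= l q a.+1 * a.+1)%N by move: h2; rewrite LsumS /d; nia.
  by move=> /(leq_div2r a.+1); rewrite mulnK.
have en : n = (Lsum q a + d %/ a.+1 * a.+1 + d %% a.+1)%N by rewrite /d in hd *; lia.
rewrite en.
have := tri (err_step (Lsum q a + d %/ a.+1 * a.+1) (d %% a.+1) g hg)
  (inner _ _ hg (full a g hg) _ hb).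
have h3 : ((runs q a + d %/ a.+1)%:R <= (runs q a.+1)%:R :> R).
  by rewrite ler_nat /=; lia.
have h4 : ((d %% a.+1)%:R <= (a.+1)%:R :> R) by rewrite ler_nat; lia.
lra.
Qed.

End Run.

Section Final.
Variable R : realType.
Local Open Scope ring_scope.

Lemma runs_bound q (M : R) t (hM : forall j : nat, (t < j)%N -> (l q j)%:R <= M) a :
  (runs q a)%:R <= (runs q t)%:R + M * a%:R.
Proof.
have M0 : 0 <= M by apply: le_trans (hM t.+1 (ltnSn t)); exact: ler0n.
have K0 : (0 : R) <= (runs q t)%:R by exact: ler0n.
elim: a => [|a IH]; first by rewrite mulr0 addr0.
case: (leqP a.+1 t) => h.
  have := runs_mono q _ _ h; rewrite -(ler_nat R) => h'.
  have : 0 <= M * (a.+1)%:R by apply: mulr_ge0 => //; exact: ler0n.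
  lra.
have := hM a.+1 h.
have -> : (runs q a.+1)%:R = (runs q a)%:R + (l q a.+1)%:R :> R by rewrite -natrD.
rewrite -natr1 mulrDr mulr1; lra.
Qed.

Lemma final_ineq (K M psi u s A : R) : 0 <= K -> 1 <= M -> 1 < psi -> 1 <= u ->
  0 < s -> 1 <= A -> A - 1 < u * s -> (2 * K + 2 * M + 1) / (psi - 1) < s ->
  (2 * (K + M * A) + A) / s ^+ 2 < psi * u * (2 * M + 1) * s^-1.
Proof.
move=> K0 M1 p1 u1 s0 A1 hA hC.
rewrite ltr_pdivrMr in hC; last by lra.
have h1 : (2 * M + 1) * (A - 1) <= (2 * M + 1) * (u * s).
  by apply: ler_wpM2l; lra.
have h2 : (psi - 1) * s <= (psi - 1) * s * (u * (2 * M + 1)).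
  have : 1 <= u * (2 * M + 1) by nra.
  have : 0 <= (psi - 1) * s by apply: mulr_ge0; lra.
  nra.
have hE : 2 * (K + M * A) + A < psi * u * (2 * M + 1) * s.
  have -> : psi * u * (2 * M + 1) * s = (psi - 1) * s * (u * (2 * M + 1)) + (2 * M + 1) * (u * s) by ring.
  lra.
have s0' : s != 0 by rewrite gt_eqF.
have -> : psi * u * (2 * M + 1) * s^-1 = (psi * u * (2 * M + 1) * s) / s ^+ 2 by field.
by rewrite ltr_pM2r // invr_gt0 exprn_gt0.
Qed.

End Final.
Arguments final_ineq {R K M psi u s A}.

Local Open Scope ring_scope.

Theorem mainTheorem11 (R : realType) (q : nat -> nat)
  (hbasic : basic_seq q) (hinf : infinite_in_limit q)
  (M : R) (t : nat) (hM : forall j : nat, (t < j)%N -> (l q j)%:R <= M)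
  (F : nat -> nat -> nat -> int) (hF : Q_special R q F)
  (psi : R) (hpsi : 1 < psi) :
  exists N : nat, forall n : nat, (N <= n)%N ->
    star_discrepancy (y_F R q F) n
      < psi * Num.sqrt (2 * M) * (2 * M + 1) * (Num.sqrt n%:R)^-1.
Proof.
have M1 : 1 <= M.
  apply: le_trans (hM t.+1 (ltnSn t)); rewrite ler1n; exact: l_ge1.
set K : R := (runs q t)%:R.
have K0 : 0 <= K by exact: ler0n.
set C : R := (2 * K + 2 * M + 1) / (psi - 1).
have C0 : 0 <= C by apply: divr_ge0; lra.
exists (maxn 1 (Num.Def.archi_bound (C ^+ 2))) => n hn.
have n1 : (0 < n)%N by move: hn; rewrite geq_max => /andP [].
have nC : C ^+ 2 < n%:R.
  apply: lt_le_trans (archi_boundP (exprn_ge0 2 C0)) _.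
  by rewrite ler_nat; move: hn; rewrite geq_max => /andP [].
have [a [ha h1 hb]] := general _ _ _ hF n n1.
set s := Num.sqrt (n%:R : R).
have s2 : s ^+ 2 = n%:R by rewrite sqr_sqrtr // ler0n.
have s0 : 0 < s by rewrite sqrtr_gt0 ltr0n.
set u := Num.sqrt (2 * M).
have u2 : u ^+ 2 = 2 * M by rewrite sqr_sqrtr //; lra.
have u0 : 0 <= u by exact: sqrtr_ge0.
have u1 : 1 <= u by nra.
have sC : C < s.
  rewrite -(ltr_pXn2r (_ : (0 < 2)%N)) ?s2 ?nnegrE //; lra.
have eA : (a%:R : R) = (a.-1)%:R + 1 by rewrite natr1 prednK.
have hnat : (a.-1 * a.-1 < 2 * n)%N.
  have := Lsum_sq q a.-1; nia.
have hA' : ((a.-1)%:R : R) * (a.-1)%:R < 2 * n%:R.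
  by move: hnat; rewrite -(ltr_nat R) natrM natrM.
have hA : (a.-1)%:R < u * s.
  have hus : (u * s) ^+ 2 = 2 * M * n%:R by rewrite exprMn u2 s2.
  rewrite -(ltr_pXn2r (_ : (0 < 2)%N)) ?hus ?nnegrE ?ler0n //; last first.
    by apply: mulr_ge0; lra.
  have : 0 <= n%:R :> R by exact: ler0n.
  nra.
have A1 : 1 <= (a%:R : R) by rewrite ler1n.
have key := final_ineq K0 M1 hpsi u1 s0 A1 (ltac:(rewrite eA; lra)) sC.
rewrite s2 in key.
apply: le_lt_trans key.
rewrite /star_discrepancy; apply: ge_sup.
  eexists; exists 1; last reflexivity.
  by rewrite /= ltr01 lexx.
move=> _ [g hg <-].
have hg' : 0 < g <= 1 by exact: hg.
have nz : (n%:R : R) != 0 by rewrite pnatr_eq0 -lt0n.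
change (`|(cnt R q F n g)%:R / n%:R - g| <= (2 * (K + M * a%:R) + a%:R) / n%:R).
rewrite (_ : (cnt R q F n g)%:R / n%:R - g = err R q F n g / n%:R); last first.
  by rewrite /err; field.
rewrite normf_div normr_nat ler_wpM2r ?invr_ge0 ?ler0n //.
have := hb g hg'.
have := @runs_bound R q M t hM a.
lra.
Qed.
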